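(* If $h=1/p$, then for any weight matrix $V\in\mathbb{R}^{2p\times(d+1)}$, $\lVert\nabla^2_VL\rVert_{op}\le 5pL(V)$.
   Context: Huberized ReLU with bandwidth $h$: $\phi(z)=0$ for $z<0$, $z^2/(2h)$ for $z\in[0,h]$, $z-h/2$ for $z>h$; $\phi'(z)=0$ for $z<0$, $z/h$ on $[0,h]$, $1$ for $z>h$; weak second derivative $\gamma(z)=1/h$ for $z\in[0,h]$ and $0$ otherwise. Data $(x_1,y_1),\ldots,(x_n,y_n)$ with $x_s\in\mathbb{R}^{d+1}$, $\lVert x_s\rVert=1$, $y_s\in\{-1,1\}$. For $V$ with rows $v_1,\ldots,v_{2p}$ and fixed $u_1=\cdots=u_p=1$, $u_{p+1}=\cdots=u_{2p}=-1$: $f_V(x)=\sum_{i=1}^{2p}u_i\phi(v_i\cdot x)$, $L(V)=\frac1n\sum_s\ln(1+\exp(-y_sf_V(x_s)))$. The weak Hessian $\nabla^2_VL$ is the block matrix with blocks, for $i\ne j$, $\frac{u_iu_j}{n}\sum_s\frac{\phi'(v_i\cdot x_s)\phi'(v_j\cdot x_s)e^{y_sf_V(x_s)}}{(1+e^{y_sf_V(x_s)})^2}x_sx_s^\top$ and, for $i=j$, $\frac1n\sum_s\Big[\frac{-u_i\gamma(v_i\cdot x_s)y_s}{1+e^{y_sf_V(x_s)}}+\frac{\phi'(v_i\cdot x_s)^2e^{y_sf_V(x_s)}}{(1+e^{y_sf_V(x_s)})^2}\Big]x_sx_s^\top$. $\lVert\cdot\rVert_{op}$ is the operator norm. *)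

(* Defs.v *)
From HB Require Import structures.
From mathcomp Require Import all_boot all_order all_algebra.
From mathcomp Require Import all_classical all_reals all_analysis.
Set Implicit Arguments. Unset Strict Implicit. Unset Printing Implicit Defensive.
Import Order.TTheory GRing.Theory Num.Theory.
Local Open Scope ring_scope.

Section Defs.
Variable R : realType.

Definition hrelu (h z : R) : R :=
  if z < 0 then 0 else if z <= h then z ^+ 2 / (2 * h) else z - h / 2.
Definition hrelu' (h z : R) : R :=
  if z < 0 then 0 else if z <= h then z / h else 1.
Definition hgamma (h z : R) : R :=
  if (0 <= z) && (z <= h) then 1 / h else 0.

(* fixed output weights: u_i = 1 for i < p, -1 otherwise (i : 'I_(2p)) *)
Definition uw (p : nat) (i : 'I_(2 * p)) : R := if (i < p)%N then 1 else -1.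

Definition dotv (p d : nat) (V : 'M[R]_(2 * p, d.+1)) (i : 'I_(2 * p))
  (x : 'rV[R]_(d.+1)) : R := \sum_(a < d.+1) V i a * x 0 a.

Definition fV (h : R) (p d : nat) (V : 'M[R]_(2 * p, d.+1)) (x : 'rV[R]_(d.+1)) : R :=
  \sum_(i < 2 * p) uw i * hrelu h (dotv V i x).

Definition lossL (h : R) (n p d : nat) (x : 'I_n -> 'rV[R]_(d.+1)) (y : 'I_n -> R)
  (V : 'M[R]_(2 * p, d.+1)) : R :=
  n%:R^-1 * \sum_(s < n) ln (1 + expR (- (y s * fV h V (x s)))).

Definition hess_block (h : R) (n p d : nat) (x : 'I_n -> 'rV[R]_(d.+1))
  (y : 'I_n -> R) (V : 'M[R]_(2 * p, d.+1)) (i j : 'I_(2 * p)) : 'M[R]_(d.+1) :=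
  let E s := expR (y s * fV h V (x s)) in
  if i != j then
    (uw i * uw j / n%:R) *:
      \sum_(s < n) ((hrelu' h (dotv V i (x s)) * hrelu' h (dotv V j (x s))
                      * E s / (1 + E s) ^+ 2) *: ((x s)^T *m x s))
  else
    n%:R^-1 *:
      \sum_(s < n) ((- uw i * hgamma h (dotv V i (x s)) * y s / (1 + E s)
                     + hrelu' h (dotv V i (x s)) ^+ 2 * E s / (1 + E s) ^+ 2)
                     *: ((x s)^T *m x s)).

Definition block_apply (p d : nat) (H : 'I_(2 * p) -> 'I_(2 * p) -> 'M[R]_(d.+1))
  (W : 'M[R]_(2 * p, d.+1)) : 'M[R]_(2 * p, d.+1) :=
  \matrix_(i, a) \sum_(j < 2 * p) \sum_(b < d.+1) H i j a b * W j b.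

Definition euclid (m k : nat) (W : 'M[R]_(m, k)) : R :=
  Num.sqrt (\sum_(i < m) \sum_(a < k) W i a ^+ 2).

Definition op_norm (p d : nat) (H : 'I_(2 * p) -> 'I_(2 * p) -> 'M[R]_(d.+1)) : R :=
  sup [set r : R | exists W : 'M[R]_(2 * p, d.+1),
                     euclid W = 1 /\ r = euclid (block_apply H W)].

End Defs.

(* Main.v *)
Require Import Defs.
From HB Require Import structures.
From mathcomp Require Import all_boot all_order all_algebra.
From mathcomp Require Import all_classical all_reals all_analysis.
From mathcomp Require Import ring lra.
Import Order.TTheory GRing.Theory Num.Theory.
Local Open Scope ring_scope.
Section Nrm.
Variable R : realType.

Definition nrm {T : finType} (f : T -> R) := Num.sqrt (\sum_t f t ^+ 2).

Lemma nrm_ge0 {T : finType} (f : T -> R) : 0 <= nrm f.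
Proof. exact: sqrtr_ge0. Qed.

Lemma cs2 {T : finType} (f g : T -> R) :
  (\sum_t f t * g t) ^+ 2 <= (\sum_t f t ^+ 2) * (\sum_t g t ^+ 2).
Proof.
set A := \sum_t f t ^+ 2; set B := \sum_t g t ^+ 2; set S := \sum_t f t * g t.
have A0 : 0 <= A by apply: sumr_ge0 => t _; exact: sqr_ge0.
have B0 : 0 <= B by apply: sumr_ge0 => t _; exact: sqr_ge0.
have [Ae|An] := eqVneq A 0.
  have f0 : forall t, f t = 0.
    move=> t; apply/eqP; rewrite -sqrf_eq0.
    move: Ae => /eqP; rewrite psumr_eq0 => [/allP /(_ t) H|t' _]; last exact: sqr_ge0.
    by apply: H; rewrite mem_index_enum.
  have -> : S = 0 by rewrite /S big1 // => t _; rewrite f0 mul0r.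
  by rewrite Ae expr0n /= mul0r.
have Ap : 0 < A by rewrite lt_def An A0.
have H : 0 <= \sum_t (A * g t - S * f t) ^+ 2 by apply: sumr_ge0 => t _; exact: sqr_ge0.
have E : \sum_t (A * g t - S * f t) ^+ 2 = A * (A * B - S ^+ 2).
  rewrite (eq_bigr (fun t => A ^+ 2 * g t ^+ 2 - (2 * A * S) * (f t * g t) + S ^+ 2 * f t ^+ 2)); last by move=> t _; ring.
  rewrite big_split /= sumrB -!mulr_sumr -/A -/B -/S; ring.
move: H; rewrite E pmulr_rge0 // subr_ge0 => H.
exact: H.
Qed.

Lemma cs {T : finType} (f g : T -> R) : `|\sum_t f t * g t| <= nrm f * nrm g.
Proof.
rewrite /nrm -sqrtrM ?sumr_ge0 // => [|t _]; last exact: sqr_ge0.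
rewrite -sqrtr_sqr ler_sqrt ?cs2 // mulr_ge0 // sumr_ge0 // => t _; exact: sqr_ge0.
Qed.

Lemma nrm_sq {T : finType} (f : T -> R) : nrm f ^+ 2 = \sum_t f t ^+ 2.
Proof. by rewrite sqr_sqrtr // sumr_ge0 // => t _; exact: sqr_ge0. Qed.

Lemma nrm_le {T : finType} (f : T -> R) c : 0 <= c -> \sum_t f t ^+ 2 <= c ^+ 2 -> nrm f <= c.
Proof. by move=> c0 H; rewrite /nrm -(ger0_norm c0) -sqrtr_sqr ler_sqrt // sqr_ge0. Qed.

Lemma nrmD {T : finType} (f g : T -> R) : nrm (fun t => f t + g t) <= nrm f + nrm g.
Proof.
apply: nrm_le; first by rewrite addr_ge0 // nrm_ge0.
rewrite (eq_bigr (fun t => f t ^+ 2 + g t ^+ 2 + 2 * (f t * g t))); last by move=> t _; ring.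
rewrite !big_split /= -mulr_sumr -!nrm_sq.
have := cs f g; have := ler_norm (\sum_t f t * g t).
set S := \sum_t _ => H1 H2.
have := nrm_ge0 f; have := nrm_ge0 g; nra.
Qed.

Lemma nrm_ext {T : finType} (f g : T -> R) : (forall t, f t = g t) -> nrm f = nrm g.
Proof. by move=> H; rewrite /nrm (eq_bigr (fun t => g t ^+ 2)) // => t _; rewrite H. Qed.

Lemma nrm_sum {T : finType} {I : Type} (r : seq I) (F : I -> T -> R) :
  nrm (fun t => \sum_(s <- r) F s t) <= \sum_(s <- r) nrm (F s).
Proof.
elim: r => [|a r IH].
  rewrite big_nil (@nrm_ext _ _ (fun _ => 0)) => [|t]; last by rewrite big_nil.
  by rewrite /nrm big1 ?sqrtr0 // => t _; rewrite expr0n.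
rewrite big_cons (@nrm_ext _ _ (fun t => F a t + \sum_(s <- r) F s t)) => [|t]; last by rewrite big_cons.
by apply: le_trans (nrmD _ _) _; rewrite lerD2l.
Qed.

Lemma nrmZ {T : finType} (f : T -> R) c : nrm (fun t => c * f t) = `|c| * nrm f.
Proof.
rewrite /nrm (eq_bigr (fun t => c ^+ 2 * f t ^+ 2)) => [|t _]; last by rewrite exprMn.
by rewrite -mulr_sumr sqrtrM ?sqr_ge0 // sqrtr_sqr.
Qed.

Lemma nrm_pair {I J : finType} (f : I -> R) (g : J -> R) :
  nrm (fun t : I * J => g t.2 * f t.1) = nrm g * nrm f.
Proof.
rewrite /nrm -sqrtrM ?sumr_ge0 // => [|t _]; last exact: sqr_ge0.
congr Num.sqrt; rewrite -(pair_bigA _ (fun i j => (g j * f i) ^+ 2)) /= mulrC mulr_suml.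
apply: eq_bigr => i _; rewrite mulr_sumr; apply: eq_bigr => j _; rewrite exprMn mulrC.
by [].
Qed.

End Nrm.
Arguments nrm {R T} f.
Section Aux.
Variable R : realType.

Lemma uw2 p (i : 'I_(2 * p)) : uw R i ^+ 2 = 1.
Proof. by rewrite /uw; case: ifP => _; rewrite ?sqrrN expr1n. Qed.

Lemma hrelu'_bnd (h z : R) : 0 < h -> 0 <= hrelu' h z <= 1.
Proof.
move=> h0; rewrite /hrelu'; case: ltP => z0; first by rewrite lexx ler01.
case: ifP => zh; last by rewrite ler01 lexx.
by rewrite divr_ge0 ?(ltW h0) //= ler_pdivrMr // mul1r.
Qed.

Lemma hgamma_bnd (h z : R) : 0 < h -> 0 <= hgamma h z <= h^-1.
Proof.
move=> h0; rewrite /hgamma; case: ifP => _; last by rewrite lexx invr_ge0 ltW.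
by rewrite div1r lexx invr_ge0 ltW.
Qed.

Lemma r_le_ell (e : R) : 0 < e -> (1 + e)^-1 <= ln (1 + e^-1).
Proof.
move=> e0.
have e1 : 0 < 1 + e by rewrite addr_gt0.
have r1 : (1 + e)^-1 < 1 by rewrite invf_lt1 // ltrDl.
have r0 : 0 < (1 + e)^-1 by rewrite invr_gt0.
have -> : 1 + e^-1 = (1 + - (1 + e)^-1)^-1.
  by field; rewrite gt_eqF //= addrAC subrr add0r gt_eqF.
rewrite lnV; last by rewrite posrE subr_gt0.
rewrite lerNr; apply: le_ln1Dx; rewrite ltrN2 //.
Qed.

Lemma diag_help (u ph ga yy e xa xb : R) : u ^+ 2 = 1 ->
  (- u * ga * yy / (1 + e) + ph ^+ 2 * e / (1 + e) ^+ 2) * (xa * xb) =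
  (e / (1 + e) ^+ 2 * (u * ph) * (u * ph) + 1 * (- u * ga * yy / (1 + e))) * (xa * xb).
Proof.
move=> u2.
have -> : e / (1 + e) ^+ 2 * (u * ph) * (u * ph) = e / (1 + e) ^+ 2 * ph ^+ 2 * u ^+ 2 by ring.
rewrite u2; ring.
Qed.

End Aux.
Theorem lemma2 (R : realType) (n p d : nat) (x : 'I_n -> 'rV[R]_(d.+1))
  (y : 'I_n -> R) (V : 'M[R]_(2 * p, d.+1)) :
  (0 < p)%N ->
  (forall s, \sum_(a < d.+1) x s 0 a ^+ 2 = 1) ->
  (forall s, y s = 1 \/ y s = -1) ->
  op_norm (hess_block (p%:R^-1) x y V)
    <= 5 * p%:R * lossL (p%:R^-1) x y V.
Proof.
move=> p0 hx hy.
set h : R := p%:R^-1.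
have pR : 0 < p%:R :> R by rewrite ltr0n.
have h0 : 0 < h by rewrite invr_gt0.
have hinv : h^-1 = p%:R by rewrite invrK.
pose ell := fun s : 'I_n => ln (1 + expR (- (y s * fV h V (x s)))).
have ell0 : forall s, 0 <= ell s.
  by move=> s; apply: ln_ge0; rewrite lerDl expR_ge0.
have L0 : 0 <= lossL h x y V.
  by rewrite /lossL mulr_ge0 ?invr_ge0 ?ler0n // sumr_ge0 // => s _; exact: ell0.
have y2 : forall s, y s ^+ 2 = 1.
  by move=> s; case: (hy s) => ->; rewrite ?sqrrN expr1n.
have key : forall W : 'M[R]_(2 * p, d.+1), euclid W = 1 ->
    euclid (block_apply (hess_block h x y V) W) <= 3 * p%:R * lossL h x y V.
  move=> W W1.
  have W1' : \sum_i \sum_a W i a ^+ 2 = 1.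
    move: W1; rewrite /euclid => W1.
    rewrite -(@sqr_sqrtr _ (\sum_i \sum_a W i a ^+ 2)) ?W1 ?expr1n //.
    by apply: sumr_ge0 => i _; apply: sumr_ge0 => a _; exact: sqr_ge0.
  pose E := fun s : 'I_n => expR (y s * fV h V (x s)).
  have E0 : forall s, 0 < E s by move=> s; exact: expR_gt0.
  pose q := fun s => E s / (1 + E s) ^+ 2.
  pose r := fun s => (1 + E s)^-1.
  pose g := fun s i => uw R i * hrelu' h (dotv V i (x s)).
  pose del := fun s i => - uw R i * hgamma h (dotv V i (x s)) * y s / (1 + E s).
  pose z := fun s j => \sum_b x s 0 b * W j b.
  pose G := fun s => \sum_j g s j * z s j.
  pose w := fun s i => q s * G s * g s i + del s i * z s i.
  pose C := fun s (i j : 'I_(2 * p)) => q s * g s i * g s j + (i == j)%:R * del s i.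
  have Hent : forall i j a b, hess_block h x y V i j a b =
      n%:R^-1 * \sum_s C s i j * (x s 0 a * x s 0 b).
    move=> i j a b; rewrite /hess_block /=.
    case: (eqVneq i j) => [<-|nij] /=.
      rewrite mxE summxE mulr_sumr [in RHS]mulr_sumr; apply: eq_bigr => s _.
      rewrite !mxE big_ord1 !mxE; congr (_ * _).
      rewrite /C /q /g /del eqxx /=.
      by apply: diag_help; exact: uw2.
    rewrite mxE summxE !mulr_sumr; apply: eq_bigr => s _.
    rewrite !mxE big_ord1 !mxE /C /q /g /del (negbTE nij) /= mulr0n.
    rewrite /E mul0r addr0; ring.
  have Hba : forall i a, block_apply (hess_block h x y V) W i a =
      n%:R^-1 * \sum_s x s 0 a * w s i.
    move=> i a; rewrite mxE.
    under eq_bigr => j _ do under eq_bigr => b _ do rewrite Hent -mulrA mulr_suml.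
    under eq_bigr => j _ do rewrite -mulr_sumr.
    rewrite -mulr_sumr; congr (_ * _).
    under eq_bigr => j _ do rewrite exchange_big.
    rewrite exchange_big; apply: eq_bigr => s _.
    have Hj : forall j, \sum_b C s i j * (x s 0 a * x s 0 b) * W j b = x s 0 a * (C s i j * z s j).
      by move=> j; rewrite /z !mulr_sumr; apply: eq_bigr => b _; ring.
    rewrite (eq_bigr _ (fun j _ => Hj j)) -mulr_sumr; congr (_ * _).
    rewrite /C /w.
    under eq_bigr => j _ do rewrite mulrDl.
    rewrite big_split /=; congr (_ + _).
      by rewrite [RHS]mulrAC /G mulr_sumr; apply: eq_bigr => j _; ring.
    rewrite (bigD1 i) //= eqxx big1 ?addr0 => [|j ji]; first by rewrite mul1r.
    by rewrite eq_sym (negbTE ji) /= mulr0n !mul0r.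
  have Hw : forall s, nrm (w s) <= 3 * p%:R * ell s.
    move=> s.
    have r0 : 0 <= r s by rewrite /r invr_ge0 addr_ge0 // ltW.
    have q0 : 0 <= q s by rewrite /q divr_ge0 ?sqr_ge0 // ltW.
    have z1 : \sum_j z s j ^+ 2 <= 1.
      rewrite -W1'; apply: ler_sum => j _; rewrite /z.
      by apply: le_trans (cs2 _ _ _) _; rewrite hx mul1r.
    have nz : nrm (z s) <= 1 by apply: nrm_le; rewrite ?ler01 ?expr1n.
    have g2 : \sum_i g s i ^+ 2 <= (2 * p)%:R.
      apply: le_trans (_ : _ <= \sum_(i < 2 * p) 1) _; last by rewrite sumr_const card_ord.
      apply: ler_sum => i _; rewrite /g exprMn uw2 mul1r.
      have /andP[a b] := @hrelu'_bnd _ _ (dotv V i (x s)) h0.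
      by rewrite expr2; apply: le_trans (ler_pM a a b b) _; rewrite mulr1.
    have G1 : `|G s| <= nrm (g s).
      apply: le_trans (cs _ _ _) _.
      by rewrite -[X in _ <= X]mulr1 ler_wpM2l // nrm_ge0.
    have part1 : nrm (fun i => q s * G s * g s i) <= (2 * p)%:R * q s.
      rewrite nrmZ normrM (ger0_norm q0).
      apply: le_trans (_ : _ <= q s * (nrm (g s) * nrm (g s))) _.
        by rewrite -mulrA ler_wpM2l // ler_wpM2r ?nrm_ge0.
      by rewrite -expr2 nrm_sq mulrC ler_wpM2r.
    have part2 : nrm (fun i => del s i * z s i) <= p%:R * r s.
      apply: nrm_le; first by rewrite mulr_ge0 ?ler0n.
      apply: le_trans (_ : _ <= \sum_i (p%:R * r s) ^+ 2 * z s i ^+ 2) _.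
        apply: ler_sum => i _; rewrite exprMn ler_wpM2r ?sqr_ge0 //.
        have -> : del s i ^+ 2 = (hgamma h (dotv V i (x s)) * r s) ^+ 2 * (uw R i ^+ 2 * y s ^+ 2).
          by rewrite /del /r; ring.
        rewrite uw2 y2 mulr1.
        have /andP[a b] := @hgamma_bnd _ _ (dotv V i (x s)) h0.
        rewrite hinv in b.
        have c : hgamma h (dotv V i (x s)) * r s <= p%:R * r s by rewrite ler_wpM2r.
        have c0 : 0 <= hgamma h (dotv V i (x s)) * r s by rewrite mulr_ge0.
        by rewrite mulr1 !expr2; apply: ler_pM.
      rewrite -mulr_sumr; apply: le_trans (ler_wpM2l (sqr_ge0 _) z1) _.
      by rewrite mulr1.
    have qr : q s <= r s.
      have -> : q s = (E s / (1 + E s)) * r s.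
        by rewrite /q /r; field; rewrite gt_eqF // addr_gt0.
      rewrite -[X in _ <= X]mul1r ler_wpM2r // ler_pdivrMr ?addr_gt0 //.
      by rewrite mul1r lerDr.
    have rl : r s <= ell s by rewrite /r /ell /E expRN; apply: r_le_ell; exact: expR_gt0.
    rewrite /w.
    apply: le_trans (nrmD _ (fun i => q s * G s * g s i) (fun i => del s i * z s i)) _.
    apply: le_trans (lerD part1 part2) _.
    rewrite natrM.
    have := ler_wpM2l (ltW pR) qr; have := ler_wpM2l (ltW pR) rl.
    have := mulr_ge0 (ltW pR) q0.
    nra.
  have -> : euclid (block_apply (hess_block h x y V) W) =
      n%:R^-1 * nrm (fun t : 'I_(2 * p) * 'I_d.+1 => \sum_s x s 0 t.2 * w s t.1).
    rewrite -[n%:R^-1]ger0_norm ?invr_ge0 ?ler0n // -nrmZ /nrm /euclid pair_bigA.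
    by congr Num.sqrt; apply: eq_bigr => t _; rewrite Hba.
  have n0 : 0 <= n%:R^-1 :> R by rewrite invr_ge0 ler0n.
  apply: le_trans (ler_wpM2l n0 (nrm_sum _ _ _)) _.
  have -> : \sum_s nrm (fun t : 'I_(2 * p) * 'I_d.+1 => x s 0 t.2 * w s t.1) = \sum_s nrm (w s).
    apply: eq_bigr => s _; rewrite nrm_pair.
    by rewrite /nrm hx sqrtr1 mul1r.
  rewrite /lossL mulrCA ler_wpM2l ?invr_ge0 ?ler0n // mulr_sumr.
  by apply: ler_sum => s _; exact: Hw.
rewrite /op_norm; set S := (X in sup X).
have [->|/set0P ne] := eqVneq S set0.
  by rewrite sup0 mulr_ge0 // mulr_ge0 // ler0n.
apply: ge_sup => // r [W [W1 ->]].
apply: le_trans (key W W1) _.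
by rewrite ler_wpM2r // ler_wpM2r ?ler0n // ler_nat.
Qed.
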